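(* For $0\le L<1<R$ define $$\Phi(L,R)=\mathrm{p.v.}\int_L^R\frac{\pi\sqrt{(R^2-x^2)(x^2-L^2)}}{x^2-1}\,dx,$$ the principal value being taken at $x=1$. (i) $\Phi(L,R)$ is strictly increasing in $L$ and strictly increasing in $R$. (ii) There is a unique $R_c>1$ with $\Phi(0,R_c)=0$ (numerically $R_c\approx1.8102$). (iii) If $\Phi(L,R)=0$, then $L+R<2$ and $L^2+R^2>2$. *)

(* Defs.v *)
From Stdlib Require Import Reals.
From Coquelicot Require Import Coquelicot.
Open Scope R_scope.

Definition phi_integrand (a b x : R) : R :=
  PI * sqrt ((b ^ 2 - x ^ 2) * (x ^ 2 - a ^ 2)) / (x ^ 2 - 1).

Definition pv_trunc (a b eps : R) : R :=
  RInt (phi_integrand a b) a (1 - eps) + RInt (phi_integrand a b) (1 + eps) b.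

Definition pv_converges (a b l : R) : Prop :=
  filterlim (pv_trunc a b) (at_right 0) (locally l).

(* Phi(L,R) = p.v. integral (value of the limit eps -> 0+; meaningful when
   the limit exists, which is asserted as part of the theorem) *)
Definition Phi (a b : R) : R := real (Lim (pv_trunc a b) 0).

(* Main.v *)
Require Import Defs.
From Stdlib Require Import Reals Lra Psatz.
From Coquelicot Require Import Coquelicot.
Open Scope R_scope.

Definition Aa (y : R) : R := 2 * atan (y / (1 + sqrt (1 - y ^ 2))).

Lemma Aa_derive y : -1 < y < 1 -> is_derive Aa y (/ sqrt (1 - y ^ 2)).
Proof.
intros Hy. unfold Aa. auto_derive.
- split; [nra|]. split; [|exact I].
  pose proof (sqrt_pos (1 + - (y * (y * 1)))). lra.
- replace (1 + - (y * (y * 1))) with (1 - y ^ 2) by ring.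
  assert (H1 : 0 < 1 - y ^ 2) by nra.
  pose proof (sqrt_lt_R0 _ H1) as Hs.
  pose proof (sqrt_sqrt _ (Rlt_le _ _ H1)) as Hss.
  set (s := sqrt (1 - y ^ 2)) in *.
  assert (Hy2 : y ^ 2 = 1 - s * s) by lra.
  field_simplify; try (split; try lra; nra).
  rewrite Hy2. field. split; [lra|nra].
  lra.
Qed.
Ltac toR := match goal with |- @eq _ ?a ?b => change (@eq R a b) end.

Lemma cont_eps (G : R -> R) p : continuous G p ->
  forall e, 0 < e -> exists d, 0 < d /\ forall y, Rabs (y - p) < d -> Rabs (G y - G p) < e.
Proof.
intros HG e He.
apply continuity_pt_filterlim in HG.
destruct (HG e He) as [d [Hd H]].
exists d; split; auto.
intros y Hy.
destruct (Req_dec y p) as [->|Hne].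
- rewrite Rminus_eq_0, Rabs_R0; auto.
- apply (H y). split. { split; [exact I| auto]. } exact Hy.
Qed.

Lemma zero_of_small x : (forall e, 0 < e -> Rabs x < e) -> x = 0.
Proof.
intros H. destruct (Req_dec x 0) as [|Hn]; auto.
assert (Ha : 0 < Rabs x) by (apply Rabs_pos_lt; auto).
specialize (H _ Ha). lra.
Qed.

Lemma Chasles_R f a b c : ex_RInt f a b -> ex_RInt f b c ->
  RInt f a c = RInt f a b + RInt f b c.
Proof. intros H1 H2. symmetry. apply (RInt_Chasles f a b c H1 H2). Qed.

Lemma ex_RInt_cont (f : R -> R) a b : (forall x, Rmin a b <= x <= Rmax a b -> continuous f x) ->
  ex_RInt f a b.
Proof. intros H. apply (@ex_RInt_continuous R_CompleteNormedModule). exact H. Qed.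

Lemma FTC_open (f G : R -> R) p q : p < q ->
 (forall x, p <= x <= q -> continuous f x) ->
 (forall x, p < x < q -> is_derive G x (f x)) ->
 continuous G p -> continuous G q -> RInt f p q = G q - G p.
Proof.
intros Hpq Hf HG Gp Gq.
assert (Hex : forall r s, p <= r -> r <= s -> s <= q -> ex_RInt f r s).
{ intros r s H1 H2 H3. apply ex_RInt_cont. intros x Hx.
  rewrite Rmin_left in Hx by lra. rewrite Rmax_right in Hx by lra. apply Hf; lra. }
destruct (continuity_ab_maj (fun x => Rabs (f x)) p q) as [xm [Hxm Hxm2]].
{ lra. }
{ intros c Hc. apply continuity_pt_filterlim.
  apply (continuous_comp f Rabs). apply Hf; auto. apply continuous_Rabs. }
set (M := Rabs (f xm)) in *.
assert (HM0 : 0 <= M) by apply Rabs_pos.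
apply Rminus_diag_uniq. apply zero_of_small. intros e He.
destruct (cont_eps G p Gp (e/4)) as [d1 [Hd1 H1]]; [lra|].
destruct (cont_eps G q Gq (e/4)) as [d2 [Hd2 H2]]; [lra|].
set (t := Rmin (Rmin (d1/2) (d2/2)) (Rmin ((q-p)/3) (e/(4*(M+1))))).
assert (Ht0 : 0 < t).
{ unfold t. repeat apply Rmin_pos; try lra. apply Rdiv_lt_0_compat; lra. }
assert (Ht1 : t <= d1/2) by (unfold t; eapply Rle_trans; [apply Rmin_l|apply Rmin_l]).
assert (Ht2 : t <= d2/2) by (unfold t; eapply Rle_trans; [apply Rmin_l|apply Rmin_r]).
assert (Ht3 : t <= (q-p)/3) by (unfold t; eapply Rle_trans; [apply Rmin_r|apply Rmin_l]).
assert (Ht4 : t <= e/(4*(M+1))) by (unfold t; eapply Rle_trans; [apply Rmin_r|apply Rmin_r]).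
set (r := p + t). set (s := q - t).
assert (Hrs : RInt f r s = G s - G r).
{ apply is_RInt_unique. apply (is_RInt_derive G f r s).
  - intros x Hx. rewrite Rmin_left in Hx by (unfold r, s; lra).
    rewrite Rmax_right in Hx by (unfold r, s; lra). apply HG. unfold r, s in Hx. lra.
  - intros x Hx. rewrite Rmin_left in Hx by (unfold r, s; lra).
    rewrite Rmax_right in Hx by (unfold r, s; lra). apply Hf. unfold r, s in Hx. lra. }
rewrite (Chasles_R f p r q) by (apply Hex; unfold r, s; lra).
rewrite (Chasles_R f r s q) by (apply Hex; unfold r, s; lra).
rewrite Hrs.
assert (B1 : Rabs (RInt f p r) <= (r - p) * M).
{ apply abs_RInt_le_const. unfold r; lra. apply Hex; unfold r; lra.
  intros x Hx. apply Hxm. unfold r in Hx; lra. }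
assert (B2 : Rabs (RInt f s q) <= (q - s) * M).
{ apply abs_RInt_le_const. unfold s; lra. apply Hex; unfold s; lra.
  intros x Hx. apply Hxm. unfold s in Hx; lra. }
assert (B3 : Rabs (G r - G p) < e/4) by (apply H1; unfold r; rewrite Rabs_right; lra).
assert (B4 : Rabs (G s - G q) < e/4) by (apply H2; unfold s; rewrite Rabs_left; lra).
assert (B5 : t * M <= e/4).
{ apply Rle_trans with (e / (4 * (M+1)) * M). apply Rmult_le_compat_r; lra.
  apply Rle_trans with (e / (4 * (M+1)) * (M+1)). apply Rmult_le_compat_l; [|lra].
  apply Rlt_le, Rdiv_lt_0_compat; lra. right; field; lra. }
replace (r - p) with t in B1 by (unfold r; ring).
replace (q - s) with t in B2 by (unfold s; ring).
replace (RInt f p r + (G s - G r + RInt f s q) - (G q - G p))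
  with (RInt f p r + RInt f s q + (G s - G q) - (G r - G p)) by ring.
eapply Rle_lt_trans. apply Rabs_triang.
eapply Rle_lt_trans. apply Rplus_le_compat_l. rewrite Rabs_Ropp. apply Rle_refl.
eapply Rle_lt_trans. apply Rplus_le_compat_r. apply Rabs_triang.
eapply Rle_lt_trans. apply Rplus_le_compat_r. apply Rplus_le_compat_r. apply Rabs_triang.
lra.
Qed.

Lemma is_derive_eq (f : R -> R) x l l' : is_derive f x l -> l = l' -> is_derive f x l'.
Proof. intros H ->. exact H. Qed.

Lemma is_derive_ext_R (f g : R -> R) x l : (forall t, f t = g t) -> is_derive f x l -> is_derive g x l.
Proof. intros H1 H2. apply (is_derive_ext f g x l H1 H2). Qed.

Lemma is_derive_plus_R (f g : R -> R) x df dg : is_derive f x df -> is_derive g x dg ->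
  is_derive (fun t => f t + g t) x (df + dg).
Proof. intros H1 H2. apply (is_derive_plus f g x df dg H1 H2). Qed.

Lemma is_derive_comp_R (f g : R -> R) x df dg : is_derive f (g x) df -> is_derive g x dg ->
  is_derive (fun t => f (g t)) x (dg * df).
Proof. intros H1 H2. apply (is_derive_comp f g x df dg H1 H2). Qed.

Lemma RInt_ext_R (f g : R -> R) a b : (forall x, Rmin a b < x < Rmax a b -> f x = g x) ->
  RInt f a b = RInt g a b.
Proof. intros H. apply (RInt_ext f g a b H). Qed.

Lemma sq_inj u v : 0 <= u -> 0 <= v -> u * u = v * v -> u = v.
Proof. intros. nra. Qed.

Lemma cont_of_der (f : R -> R) x : ex_derive f x -> continuous f x.
Proof. intros H. apply (@ex_derive_continuous R_AbsRing R_NormedModule). exact H. Qed.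

Lemma cont_mult (f g : R -> R) x : continuous f x -> continuous g x ->
  continuous (fun y => f y * g y) x.
Proof. intros. apply (continuous_mult f g); auto. Qed.

Lemma cont_plus (f g : R -> R) x : continuous f x -> continuous g x ->
  continuous (fun y => f y + g y) x.
Proof. intros. apply (continuous_plus f g); auto. Qed.

Lemma cont_minus (f g : R -> R) x : continuous f x -> continuous g x ->
  continuous (fun y => f y - g y) x.
Proof. intros. apply (continuous_minus f g); auto. Qed.

Lemma Aa_cont y : continuous Aa y.
Proof.
unfold Aa. apply cont_mult. apply continuous_const.
apply continuous_atan_comp. apply cont_mult. apply continuous_id.
apply continuous_Rinv_comp.
- apply cont_plus. apply continuous_const. apply continuous_sqrt_comp.
  apply cont_of_der. auto_derive. auto.
- pose proof (sqrt_pos (1 - y^2)). lra.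
Qed.

Lemma Aa_1 : Aa 1 = PI / 2.
Proof. unfold Aa. replace (1 - 1^2) with 0 by ring. rewrite sqrt_0.
replace (1 / (1 + 0)) with 1 by field. rewrite atan_1. field. Qed.

Lemma Aa_m1 : Aa (-1) = - (PI / 2).
Proof. unfold Aa. replace (1 - (-1)^2) with 0 by ring. rewrite sqrt_0.
replace (-1 / (1 + 0)) with (- (1)) by field. rewrite atan_opp, atan_1. field. Qed.

Lemma Aa_0 : Aa 0 = 0.
Proof. unfold Aa. replace (0 / (1 + sqrt (1 - 0^2))) with 0.
rewrite atan_0. ring. unfold Rdiv. ring. Qed.

Definition Sc (r c0 x : R) := sqrt (r ^ 2 - (x - c0) ^ 2).
Definition Sprim (r c0 x : R) :=
  ((x - c0) * sqrt (r ^ 2 - (x - c0) ^ 2) + r ^ 2 * Aa ((x - c0) / r)) / 2.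

Lemma Sc_cont r c0 x : continuous (Sc r c0) x.
Proof. unfold Sc. apply continuous_sqrt_comp. apply cont_of_der.
auto_derive. auto. Qed.

Lemma Sprim_cont r c0 x : continuous (Sprim r c0) x.
Proof.
unfold Sprim. apply cont_mult; [|apply continuous_const].
apply cont_plus.
- apply cont_mult. apply cont_of_der. auto_derive. auto.
  apply continuous_sqrt_comp. apply cont_of_der. auto_derive. auto.
- apply cont_mult. apply continuous_const.
  apply (continuous_comp (fun x => (x - c0) / r) Aa). apply cont_of_der.
  auto_derive. auto. apply Aa_cont.
Qed.

Lemma Sprim_derive r c0 x : 0 < r -> c0 - r < x < c0 + r ->
  is_derive (Sprim r c0) x (Sc r c0 x).
Proof.
intros Hr Hx.
set (y := x - c0).
assert (Hy : r ^ 2 - y ^ 2 > 0) by (unfold y; nra).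
assert (HA : is_derive (fun x => Aa ((x - c0) / r)) x ((/ r) * / sqrt (1 - ((x - c0)/r) ^ 2))).
{ apply (is_derive_comp_R Aa (fun x => (x - c0) / r)).
  apply Aa_derive. split.
  apply Rmult_lt_reg_l with r; auto. unfold Rdiv. field_simplify; try lra.
  apply Rmult_lt_reg_l with r; auto. unfold Rdiv. field_simplify; try lra.
  auto_derive. auto. field. lra. }
assert (Ht : sqrt (1 - ((x - c0)/r) ^ 2) = sqrt (r ^ 2 - y ^ 2) / r).
{ apply sq_inj. apply sqrt_pos. apply Rmult_le_pos. apply sqrt_pos. apply Rlt_le, Rinv_0_lt_compat; auto.
  rewrite sqrt_sqrt. replace (sqrt (r ^ 2 - y ^ 2) / r * (sqrt (r ^ 2 - y ^ 2) / r)) with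
   ((sqrt (r ^ 2 - y ^ 2) * sqrt (r ^ 2 - y ^ 2)) / r^2) by (field; lra).
  rewrite sqrt_sqrt by lra. unfold y. field. lra.
  replace (1 - ((x - c0) / r) ^ 2) with ((r^2 - y^2) / r^2) by (unfold y; field; lra).
  apply Rlt_le, Rdiv_lt_0_compat; nra. }
rewrite Ht in HA.
unfold Sprim.
eapply is_derive_eq.
- apply (is_derive_ext_R (fun x => / 2 * ((x - c0) * sqrt (r ^ 2 - (x - c0) ^ 2) + r ^ 2 * Aa ((x - c0) / r)))).
  { intros t. unfold Rdiv. ring. }
  apply (is_derive_scal (fun x => ((x - c0) * sqrt (r ^ 2 - (x - c0) ^ 2) + r ^ 2 * Aa ((x - c0) / r))) x (/ 2)).
  apply (is_derive_plus_R (fun x => (x - c0) * sqrt (r ^ 2 - (x - c0) ^ 2)) (fun x => r ^ 2 * Aa ((x - c0) / r))).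
  + auto_derive. unfold y in Hy; nra. reflexivity.
  + apply (is_derive_scal (fun x => Aa ((x - c0) / r)) x (r ^ 2)). exact HA.
- unfold Sc. fold y. replace (r * (r * 1) + - ((x + - c0) * ((x + - c0) * 1))) with (r^2 - y^2) by (unfold y; ring). replace (x + - c0) with y by (unfold y; ring).
  assert (Hs : 0 < sqrt (r ^ 2 - y ^ 2)) by (apply sqrt_lt_R0; lra).
  pose proof (sqrt_sqrt (r^2 - y^2) ltac:(lra)) as Hss.
  set (s := sqrt (r ^ 2 - y ^ 2)) in *.
  field_simplify; try lra.
  replace (2 * s ^ 2 - 2 * y ^ 2 + 2 * r ^ 2) with (4 * s ^ 2) by nra. change (4 * s ^ 2 / (4 * s) = s). field. lra.
Qed.

Lemma semi_int r c0 p q : 0 < r -> c0 - r <= p -> p < q -> q <= c0 + r ->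
  RInt (Sc r c0) p q = Sprim r c0 q - Sprim r c0 p.
Proof.
intros Hr H1 H2 H3. apply FTC_open; auto.
- intros; apply Sc_cont.
- intros x Hx. apply Sprim_derive; auto; lra.
- apply Sprim_cont.
- apply Sprim_cont.
Qed.

Lemma quarter_circle b : 0 < b -> RInt (fun x => sqrt (b ^ 2 - x ^ 2)) 0 b = PI * b ^ 2 / 4.
Proof.
intros Hb. rewrite (RInt_ext_R _ (Sc b 0)).
2:{ intros x _. unfold Sc. f_equal. ring. }
rewrite semi_int; try lra. unfold Sprim.
replace ((b - 0) / b) with 1 by (field; lra).
replace ((0 - 0) / b) with 0 by (field; lra).
rewrite Aa_1, Aa_0. replace (b ^ 2 - (b - 0) ^ 2) with 0 by ring. rewrite sqrt_0. toR. field.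
Qed.

Lemma semi_circle d c0 : 0 < d -> RInt (Sc d c0) (c0 - d) (c0 + d) = PI * d ^ 2 / 2.
Proof.
intros Hd. rewrite semi_int; try lra. unfold Sprim.
replace ((c0 + d - c0) / d) with 1 by (field; lra).
replace ((c0 - d - c0) / d) with (-1) by (field; lra).
rewrite Aa_1, Aa_m1. replace (d ^ 2 - (c0 + d - c0) ^ 2) with 0 by ring.
replace (d ^ 2 - (c0 - d - c0) ^ 2) with 0 by ring. rewrite sqrt_0. toR. field.
Qed.

Definition mm (a b : R) := (a ^ 2 + b ^ 2) / 2.
Definition hh (a b : R) := (b ^ 2 - a ^ 2) / 2.
Definition DD (a b : R) := (1 - a ^ 2) * (b ^ 2 - 1).
Definition dd (a b : R) := sqrt (DD a b).
Definition be (a b : R) := a ^ 2 + b ^ 2 - 2.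
Definition Wf (a b u : R) := sqrt ((b ^ 2 - u) * (u - a ^ 2)).
Definition gf (a b u : R) := 2 * DD a b + be a b * (u - 1) + 2 * dd a b * Wf a b u.
Definition Fc (a b u : R) :=
  Wf a b u + (mm a b - 1) * Aa ((u - mm a b) / hh a b) - dd a b * ln (gf a b u).

Lemma Aa_aff_derive r c0 x : 0 < r -> c0 - r < x < c0 + r ->
  is_derive (fun x => Aa ((x - c0) / r)) x (/ sqrt (r ^ 2 - (x - c0) ^ 2)).
Proof.
intros Hr Hx.
set (y := x - c0).
assert (Hy : r ^ 2 - y ^ 2 > 0) by (unfold y; nra).
eapply is_derive_eq.
{ apply (is_derive_comp_R Aa (fun x => (x - c0) / r)).
  apply Aa_derive. split.
  apply Rmult_lt_reg_l with r; auto. unfold Rdiv. field_simplify; try lra.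
  apply Rmult_lt_reg_l with r; auto. unfold Rdiv. field_simplify; try lra.
  auto_derive. auto. reflexivity. }
assert (Ht : sqrt (1 - ((x - c0)/r) ^ 2) = sqrt (r ^ 2 - y ^ 2) / r).
{ apply sq_inj. apply sqrt_pos. apply Rmult_le_pos. apply sqrt_pos. apply Rlt_le, Rinv_0_lt_compat; auto.
  rewrite sqrt_sqrt. replace (sqrt (r ^ 2 - y ^ 2) / r * (sqrt (r ^ 2 - y ^ 2) / r)) with
   ((sqrt (r ^ 2 - y ^ 2) * sqrt (r ^ 2 - y ^ 2)) / r^2) by (field; lra).
  rewrite sqrt_sqrt by lra. unfold y. field. lra.
  replace (1 - ((x - c0) / r) ^ 2) with ((r^2 - y^2) / r^2) by (unfold y; field; lra).
  apply Rlt_le, Rdiv_lt_0_compat; nra. }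
rewrite Ht. fold y. 
assert (Hs : 0 < sqrt (r ^ 2 - y ^ 2)) by (apply sqrt_lt_R0; lra).
toR. field. lra.
Qed.

Lemma Wf_derive a b u : a ^ 2 < u < b ^ 2 ->
  is_derive (Wf a b) u ((mm a b - u) / Wf a b u).
Proof.
intros Hu. unfold Wf. eapply is_derive_eq.
{ auto_derive. nra. reflexivity. }
replace ((b * (b * 1) + - u) * (u + - (a * (a * 1)))) with ((b ^ 2 - u) * (u - a ^ 2)) by ring.
assert (Hs : 0 < sqrt ((b ^ 2 - u) * (u - a ^ 2))) by (apply sqrt_lt_R0; nra).
unfold mm. toR. field. lra.
Qed.

Lemma DD_pos a b : 0 <= a < 1 -> 1 < b -> 0 < DD a b.
Proof. intros Ha Hb. unfold DD. apply Rmult_lt_0_compat; nra. Qed.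

Lemma Wf_sq a b u : a ^ 2 <= u <= b ^ 2 -> Wf a b u * Wf a b u = (b ^ 2 - u) * (u - a ^ 2).
Proof. intros. unfold Wf. apply sqrt_sqrt. nra. Qed.

Lemma dd_sq a b : 0 <= a < 1 -> 1 < b -> dd a b * dd a b = DD a b.
Proof. intros. unfold dd. apply sqrt_sqrt. apply Rlt_le, DD_pos; auto. Qed.

Lemma lin_pos a b u : 0 <= a < 1 -> 1 < b -> a ^ 2 <= u <= b ^ 2 ->
  0 < 2 * DD a b + be a b * (u - 1).
Proof.
intros Ha Hb Hu.
assert (E : (b ^ 2 - a ^ 2) * (2 * DD a b + be a b * (u - 1)) =
   (b ^ 2 - u) * (1 - a ^ 2) * (b ^ 2 - a ^ 2) + (u - a ^ 2) * (b ^ 2 - 1) * (b ^ 2 - a ^ 2))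
  by (unfold DD, be; ring).
assert (Hba : 0 < b ^ 2 - a ^ 2) by nra.
apply Rmult_lt_reg_l with (b ^ 2 - a ^ 2); auto. rewrite Rmult_0_r, E.
destruct (Rle_lt_dec u 1).
- assert (0 < (b ^ 2 - u) * (1 - a ^ 2) * (b ^ 2 - a ^ 2)).
  { apply Rmult_lt_0_compat; auto. apply Rmult_lt_0_compat; nra. }
  assert (0 <= (u - a ^ 2) * (b ^ 2 - 1) * (b ^ 2 - a ^ 2)).
  { apply Rmult_le_pos; [|lra]. apply Rmult_le_pos; nra. }
  lra.
- assert (0 <= (b ^ 2 - u) * (1 - a ^ 2) * (b ^ 2 - a ^ 2)).
  { apply Rmult_le_pos; [|lra]. apply Rmult_le_pos; nra. }
  assert (0 < (u - a ^ 2) * (b ^ 2 - 1) * (b ^ 2 - a ^ 2)).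
  { apply Rmult_lt_0_compat; auto. apply Rmult_lt_0_compat; nra. }
  lra.
Qed.

Lemma gf_pos a b u : 0 <= a < 1 -> 1 < b -> a ^ 2 <= u <= b ^ 2 -> 0 < gf a b u.
Proof.
intros Ha Hb Hu. unfold gf.
pose proof (lin_pos a b u Ha Hb Hu).
assert (0 <= dd a b * Wf a b u) by (apply Rmult_le_pos; apply sqrt_pos).
lra.
Qed.

Lemma gf_derive a b u : a ^ 2 < u < b ^ 2 ->
  is_derive (gf a b) u (be a b + 2 * dd a b * ((mm a b - u) / Wf a b u)).
Proof.
intros Hu. unfold gf.
apply (is_derive_plus_R (fun u => 2 * DD a b + be a b * (u - 1)) (fun u => 2 * dd a b * Wf a b u)).
- eapply is_derive_eq. auto_derive. auto. reflexivity. toR. ring.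
- apply (is_derive_scal (Wf a b)). apply Wf_derive; auto.
Qed.

Lemma K_ident a b u W d : (2 * DD a b + be a b * (u - 1) + 2 * d * W) * (W - d)
  - (be a b * W + 2 * d * (mm a b - u)) * (u - 1) =
  -2 * W * (d * d - DD a b) + 2 * d * (W * W - (b ^ 2 - u) * (u - a ^ 2)).
Proof. unfold DD, be, mm. field. Qed.

Lemma Fc_derive a b u : 0 <= a < 1 -> 1 < b -> a ^ 2 < u < b ^ 2 -> u <> 1 ->
  is_derive (Fc a b) u ((Wf a b u - dd a b) / (u - 1)).
Proof.
intros Ha Hb Hu Hu1.
assert (Hg : 0 < gf a b u) by (apply gf_pos; auto; lra).
assert (HW : 0 < Wf a b u) by (apply sqrt_lt_R0; nra).
assert (HWsq := Wf_sq a b u ltac:(lra)).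
assert (Hdsq := dd_sq a b Ha Hb).
assert (Hh : 0 < hh a b) by (unfold hh; nra).
unfold Fc.
eapply is_derive_eq.
{ apply (is_derive_ext_R (fun u => (Wf a b u + (mm a b - 1) * Aa ((u - mm a b) / hh a b)) + (- dd a b) * ln (gf a b u))).
  { intros t. ring. }
  apply is_derive_plus_R.
  - apply is_derive_plus_R. apply Wf_derive; auto.
    apply is_derive_scal. apply Aa_aff_derive; auto. unfold mm, hh; lra.
  - apply is_derive_scal. apply (is_derive_comp_R ln (gf a b)).
    apply is_derive_ln; auto. apply gf_derive; auto. }
replace (hh a b ^ 2 - (u - mm a b) ^ 2) with ((b ^ 2 - u) * (u - a ^ 2)) by (unfold hh, mm; field).
fold (Wf a b u).
set (W := Wf a b u) in *. set (d := dd a b) in *. set (g := gf a b u) in *.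
assert (K : (be a b * W + 2 * d * (mm a b - u)) * (u - 1) = g * (W - d)).
{ assert (E : g * (W - d) - (be a b * W + 2 * d * (mm a b - u)) * (u - 1) =
     -2 * W * (d * d - DD a b) + 2 * d * (W * W - (b ^ 2 - u) * (u - a ^ 2))).
  { unfold g, gf. fold W d. apply K_ident. }
  rewrite Hdsq, HWsq in E. lra. }
assert (K2 : (mm a b - u) + (mm a b - 1) = (W * W - DD a b) / (u - 1)).
{ rewrite HWsq. unfold mm, DD. field. lra. }
toR.
replace ((mm a b - u) / W + (mm a b - 1) * / W + - d * ((be a b + 2 * d * ((mm a b - u) / W)) * / g))
  with (((mm a b - u) + (mm a b - 1)) / W - d * ((be a b * W + 2 * d * (mm a b - u)) * (u - 1)) / (W * g * (u - 1)))
  by (field; repeat split; lra).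
rewrite K, K2, <- Hdsq. field. repeat split; lra.
Qed.

Definition Qf (a b x : R) := (b ^ 2 - x ^ 2) * (x ^ 2 - a ^ 2).
Definition hf (a b x : R) := x * sqrt (Qf a b x) / (x ^ 2 - 1).
Definition kf (a b x : R) := sqrt (Qf a b x) / (1 + x).
Definition GL (a b x : R) := (Fc a b (x ^ 2) + dd a b * ln (1 - x ^ 2)) / 2.
Definition GR (a b x : R) := (Fc a b (x ^ 2) + dd a b * ln (x ^ 2 - 1)) / 2.

Lemma sqrtQ_cont a b x : continuous (fun x => sqrt (Qf a b x)) x.
Proof. apply continuous_sqrt_comp. unfold Qf. apply cont_of_der. auto_derive. auto. Qed.

Lemma hf_cont a b x : x ^ 2 <> 1 -> continuous (hf a b) x.
Proof.
intros Hx. unfold hf. apply cont_mult. apply cont_mult. apply continuous_id. apply sqrtQ_cont.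
apply continuous_Rinv_comp. apply cont_of_der. auto_derive. auto. lra.
Qed.

Lemma kf_cont a b x : -1 < x -> continuous (kf a b) x.
Proof.
intros Hx. unfold kf. apply cont_mult. apply sqrtQ_cont.
apply continuous_Rinv_comp. apply cont_of_der. auto_derive. auto. lra.
Qed.

Lemma Fc_cont a b u : 0 <= a < 1 -> 1 < b -> a ^ 2 <= u <= b ^ 2 -> continuous (Fc a b) u.
Proof.
intros Ha Hb Hu. unfold Fc. apply cont_minus. apply cont_plus.
- unfold Wf. apply continuous_sqrt_comp. apply cont_of_der. auto_derive. auto.
- apply cont_mult. apply continuous_const.
  apply (continuous_comp (fun u => (u - mm a b) / hh a b) Aa). apply cont_of_der.
  auto_derive. auto. apply Aa_cont.
- apply cont_mult. apply continuous_const.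
  apply (continuous_comp (gf a b) ln).
  + unfold gf. apply cont_plus. apply cont_of_der. auto_derive. auto.
    apply cont_mult. apply continuous_const.
    unfold Wf. apply continuous_sqrt_comp. apply cont_of_der. auto_derive. auto.
  + apply continuous_ln. apply gf_pos; auto.
Qed.

Lemma GL_cont a b x : 0 <= a < 1 -> 1 < b -> a <= x < 1 -> continuous (GL a b) x.
Proof.
intros Ha Hb Hx. unfold GL. apply cont_mult; [|apply continuous_const].
apply cont_plus.
- apply (continuous_comp (fun x => x ^ 2) (Fc a b)). apply cont_of_der. auto_derive. auto.
  apply Fc_cont; auto. nra.
- apply cont_mult. apply continuous_const.
  apply (continuous_comp (fun x => 1 - x ^ 2) ln). apply cont_of_der. auto_derive. auto.
  apply continuous_ln. nra.
Qed.

Lemma GR_cont a b x : 0 <= a < 1 -> 1 < b -> 1 < x <= b -> continuous (GR a b) x.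
Proof.
intros Ha Hb Hx. unfold GR. apply cont_mult; [|apply continuous_const].
apply cont_plus.
- apply (continuous_comp (fun x => x ^ 2) (Fc a b)). apply cont_of_der. auto_derive. auto.
  apply Fc_cont; auto. nra.
- apply cont_mult. apply continuous_const.
  apply (continuous_comp (fun x => x ^ 2 - 1) ln). apply cont_of_der. auto_derive. auto.
  apply continuous_ln. nra.
Qed.

Lemma GL_derive a b x : 0 <= a < 1 -> 1 < b -> a < x < 1 -> is_derive (GL a b) x (hf a b x).
Proof.
intros Ha Hb Hx.
assert (Hx2 : a ^ 2 < x ^ 2 < b ^ 2) by nra.
assert (Hx1 : x ^ 2 <> 1) by nra.
unfold GL. eapply is_derive_eq.
{ apply (is_derive_ext_R (fun x => / 2 * (Fc a b (x ^ 2) + dd a b * ln (1 - x ^ 2)))).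
  { intros t. cbv beta. unfold Rdiv. ring. }
  apply is_derive_scal. apply is_derive_plus_R.
  - apply (is_derive_comp_R (Fc a b) (fun x => x ^ 2)). apply Fc_derive; auto.
    auto_derive. auto. reflexivity.
  - apply is_derive_scal. auto_derive. nra. reflexivity. }
unfold hf, Wf, Qf. toR. field. nra.
Qed.

Lemma GR_derive a b x : 0 <= a < 1 -> 1 < b -> 1 < x < b -> is_derive (GR a b) x (hf a b x).
Proof.
intros Ha Hb Hx.
assert (Hx2 : a ^ 2 < x ^ 2 < b ^ 2) by nra.
assert (Hx1 : x ^ 2 <> 1) by nra.
unfold GR. eapply is_derive_eq.
{ apply (is_derive_ext_R (fun x => / 2 * (Fc a b (x ^ 2) + dd a b * ln (x ^ 2 - 1)))).
  { intros t. cbv beta. unfold Rdiv. ring. }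
  apply is_derive_scal. apply is_derive_plus_R.
  - apply (is_derive_comp_R (Fc a b) (fun x => x ^ 2)). apply Fc_derive; auto.
    auto_derive. auto. reflexivity.
  - apply is_derive_scal. auto_derive. nra. reflexivity. }
unfold hf, Wf, Qf. toR. field. nra.
Qed.

Lemma ex_RInt_kf a b p q : 0 <= p -> 0 <= q -> ex_RInt (kf a b) p q.
Proof. intros Hp Hq. apply ex_RInt_cont. intros x Hx. apply kf_cont.
assert (0 <= Rmin p q) by (apply Rmin_glb; auto). lra. Qed.

Lemma ends_val a b : 0 <= a < 1 -> 1 < b ->
  GR a b b - GL a b a = PI / 4 * (a ^ 2 + b ^ 2 - 2).
Proof.
intros Ha Hb.
assert (HD := DD_pos a b Ha Hb).
unfold GR, GL, Fc, Wf, gf, Wf.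
replace ((b ^ 2 - b ^ 2) * (b ^ 2 - a ^ 2)) with 0 by ring.
replace ((b ^ 2 - a ^ 2) * (a ^ 2 - a ^ 2)) with 0 by ring.
rewrite sqrt_0.
replace ((b ^ 2 - mm a b) / hh a b) with 1 by (unfold mm, hh; field; nra).
replace ((a ^ 2 - mm a b) / hh a b) with (-1) by (unfold mm, hh; field; nra).
rewrite Aa_1, Aa_m1.
replace (2 * DD a b + be a b * (b ^ 2 - 1) + 2 * dd a b * 0) with ((b ^ 2 - 1) * (b ^ 2 - a ^ 2))
  by (unfold DD, be; ring).
replace (2 * DD a b + be a b * (a ^ 2 - 1) + 2 * dd a b * 0) with ((1 - a ^ 2) * (b ^ 2 - a ^ 2))
  by (unfold DD, be; ring).
rewrite !ln_mult by nra.
unfold mm. field.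
Qed.

Definition Kt (a b e : R) :=
  (Fc a b ((1 - e) ^ 2) - Fc a b ((1 + e) ^ 2) + dd a b * (ln (2 - e) - ln (2 + e))) / 2.

Lemma Kt_eq a b e : 0 < e < 1 -> GL a b (1 - e) - GR a b (1 + e) = Kt a b e.
Proof.
intros He. unfold GL, GR, Kt.
replace (1 - (1 - e) ^ 2) with (e * (2 - e)) by ring.
replace ((1 + e) ^ 2 - 1) with (e * (2 + e)) by ring.
rewrite !ln_mult by lra. field.
Qed.

Lemma Kt_cont a b : 0 <= a < 1 -> 1 < b -> continuous (Kt a b) 0.
Proof.
intros Ha Hb. unfold Kt. apply cont_mult; [|apply continuous_const].
apply cont_plus. apply cont_minus.
- apply (continuous_comp (fun e => (1 - e) ^ 2) (Fc a b)). apply cont_of_der. auto_derive. auto.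
  apply Fc_cont; auto. nra.
- apply (continuous_comp (fun e => (1 + e) ^ 2) (Fc a b)). apply cont_of_der. auto_derive. auto.
  apply Fc_cont; auto. nra.
- apply cont_mult. apply continuous_const. apply cont_minus.
  + apply (continuous_comp (fun e => 2 - e) ln). apply cont_of_der. auto_derive. auto.
    apply continuous_ln. lra.
  + apply (continuous_comp (fun e => 2 + e) ln). apply cont_of_der. auto_derive. auto.
    apply continuous_ln. lra.
Qed.

Lemma Kt_0 a b : Kt a b 0 = 0.
Proof. unfold Kt. replace (1 - 0) with (1 + 0) by ring. replace (2 - 0) with (2 + 0) by ring. field. Qed.

Lemma RInt_lin (f g : R -> R) c a b : ex_RInt f a b -> ex_RInt g a b ->
  RInt (fun x => c * f x - c * g x) a b = c * RInt f a b - c * RInt g a b.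
Proof.
intros Hf Hg.
assert (H1 : ex_RInt (fun x => c * f x) a b) by (apply (ex_RInt_scal f a b c Hf)).
assert (H2 : ex_RInt (fun x => c * g x) a b) by (apply (ex_RInt_scal g a b c Hg)).
apply (@is_RInt_unique R_CompleteNormedModule).
apply (is_RInt_minus (fun x => c * f x) (fun x => c * g x) a b).
apply (is_RInt_scal f a b c). apply (@RInt_correct R_CompleteNormedModule); auto.
apply (is_RInt_scal g a b c). apply (@RInt_correct R_CompleteNormedModule); auto.
Qed.

Lemma phi_split a b x : x ^ 2 <> 1 -> 1 + x <> 0 ->
  phi_integrand a b x = PI * hf a b x - PI * kf a b x.
Proof. intros H1 H2. unfold phi_integrand, hf, kf, Qf. field. split; intro; [apply H2|apply H1]; lra. Qed.

Definition C1 (a b : R) := PI / 4 * (a ^ 2 + b ^ 2 - 2).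

Definition Psi (a b e : R) :=
  PI * (Kt a b e + C1 a b) - PI * (RInt (kf a b) a (1 - e) + RInt (kf a b) (1 + e) b).

Lemma pv_eq a b e : 0 <= a < 1 -> 1 < b -> 0 < e -> e < 1 - a -> e < b - 1 ->
  pv_trunc a b e = Psi a b e.
Proof.
intros Ha Hb He1 He2 He3.
unfold pv_trunc, Psi.
rewrite (RInt_ext_R (phi_integrand a b) (fun x => PI * hf a b x - PI * kf a b x) a (1 - e)).
2:{ intros x Hx. rewrite Rmin_left in Hx by lra. rewrite Rmax_right in Hx by lra.
    apply phi_split; nra. }
rewrite (RInt_ext_R (phi_integrand a b) (fun x => PI * hf a b x - PI * kf a b x) (1 + e) b).
2:{ intros x Hx. rewrite Rmin_left in Hx by lra. rewrite Rmax_right in Hx by lra.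
    apply phi_split; nra. }
assert (Ehl : RInt (hf a b) a (1 - e) = GL a b (1 - e) - GL a b a).
{ apply FTC_open. lra.
  - intros x Hx. apply hf_cont. nra.
  - intros x Hx. apply GL_derive; auto; lra.
  - apply GL_cont; auto; lra.
  - apply GL_cont; auto; lra. }
assert (Ehr : RInt (hf a b) (1 + e) b = GR a b b - GR a b (1 + e)).
{ apply FTC_open. lra.
  - intros x Hx. apply hf_cont. nra.
  - intros x Hx. apply GR_derive; auto; lra.
  - apply GR_cont; auto; lra.
  - apply GR_cont; auto; lra. }
assert (Hexh1 : ex_RInt (hf a b) a (1 - e)).
{ apply ex_RInt_cont. intros x Hx. rewrite Rmin_left in Hx by lra. rewrite Rmax_right in Hx by lra.
  apply hf_cont. nra. }
assert (Hexh2 : ex_RInt (hf a b) (1 + e) b).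
{ apply ex_RInt_cont. intros x Hx. rewrite Rmin_left in Hx by lra. rewrite Rmax_right in Hx by lra.
  apply hf_cont. nra. }
rewrite !RInt_lin; auto; try (apply ex_RInt_kf; lra).
rewrite Ehl, Ehr, <- (Kt_eq a b e) by lra.
unfold C1. rewrite <- (ends_val a b Ha Hb). ring.
Qed.

Lemma loc_ball (P : R -> Prop) x d : 0 < d -> (forall z, Rabs (z - x) < d -> P z) -> locally x P.
Proof. intros Hd H. exists (mkposreal d Hd). intros z Hz. apply H. exact Hz. Qed.

Lemma Lim_right (f : R -> R) l : filterlim f (at_right 0) (locally l) -> real (Lim f 0) = l.
Proof.
intros H. unfold Lim. rewrite (is_lim_seq_unique _ l). reflexivity.
unfold is_lim_seq.
apply (filterlim_comp _ _ _ (Rbar_loc_seq 0) f eventually (at_right 0)); [|exact H].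
intros P [d Hd].
pose proof (is_lim_seq_Rbar_loc_seq 0) as HL.
destruct (HL (ball 0 d) (locally_ball 0 d)) as [N HN].
exists N. intros n Hn. apply Hd. apply HN; auto.
simpl. pose proof (pos_INR n). rewrite Rplus_0_l. apply Rinv_0_lt_compat. lra.
Qed.

Definition Jf (a b : R) := RInt (kf a b) a b.

Lemma Psi_cont a b : 0 <= a < 1 -> 1 < b -> continuous (Psi a b) 0.
Proof.
intros Ha Hb. unfold Psi. apply cont_minus; apply cont_mult; try apply continuous_const.
- apply cont_plus. apply Kt_cont; auto. apply continuous_const.
- apply cont_plus.
  + apply (continuous_comp (fun e => 1 - e) (fun y => RInt (kf a b) a y)).
    apply cont_of_der; auto_derive; auto.
    apply (continuous_RInt_1 (kf a b) a (1 - 0) (fun y => RInt (kf a b) a y)).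
    apply (loc_ball _ _ 1). lra. intros z Hz.
    apply (@RInt_correct R_CompleteNormedModule). apply ex_RInt_kf; try lra.
    apply Rabs_def2 in Hz. lra.
  + apply (continuous_comp (fun e => 1 + e) (fun y => RInt (kf a b) y b)).
    apply cont_of_der; auto_derive; auto.
    apply (continuous_RInt_2 (kf a b) (1 + 0) b (fun y => RInt (kf a b) y b)).
    apply (loc_ball _ _ 1). lra. intros z Hz.
    apply (@RInt_correct R_CompleteNormedModule). apply ex_RInt_kf; try lra.
    apply Rabs_def2 in Hz. lra.
Qed.

Lemma Psi_0 a b : 0 <= a < 1 -> 1 < b -> Psi a b 0 = PI ^ 2 / 4 * (a ^ 2 + b ^ 2 - 2) - PI * Jf a b.
Proof.
intros Ha Hb. unfold Psi, Jf, C1. rewrite Kt_0.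
replace (1 - 0) with 1 by ring. replace (1 + 0) with 1 by ring.
rewrite (Chasles_R (kf a b) a 1 b) by (apply ex_RInt_kf; lra).
field.
Qed.

Definition PhiF (a b : R) := PI ^ 2 / 4 * (a ^ 2 + b ^ 2 - 2) - PI * Jf a b.

Lemma pv_conv a b : 0 <= a < 1 -> 1 < b -> pv_converges a b (PhiF a b).
Proof.
intros Ha Hb. unfold pv_converges. unfold PhiF. rewrite <- Psi_0 by auto.
apply (filterlim_ext_loc (Psi a b)).
- exists (mkposreal (Rmin (1 - a) (b - 1)) ltac:(apply Rmin_pos; lra)).
  intros y Hy Hy0. simpl in Hy. 
  assert (Hy1 : Rabs (y - 0) < Rmin (1 - a) (b - 1)) by exact Hy.
  rewrite Rminus_0_r, Rabs_right in Hy1 by lra.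
  symmetry. apply pv_eq; auto.
  eapply Rlt_le_trans; [exact Hy1| apply Rmin_l].
  eapply Rlt_le_trans; [exact Hy1| apply Rmin_r].
- apply (filterlim_filter_le_1 (F := locally 0)).
  apply filter_le_within.
  apply Psi_cont; auto.
Qed.

Lemma Phi_eq a b : 0 <= a < 1 -> 1 < b -> Phi a b = PhiF a b.
Proof. intros Ha Hb. unfold Phi. apply Lim_right. apply pv_conv; auto. Qed.

Lemma sqrt_mult_gen p q : 0 <= p \/ 0 <= q -> sqrt (p * q) = sqrt p * sqrt q.
Proof.
intros [Hp|Hq].
- destruct (Rle_lt_dec 0 q) as [Hq|Hq].
  + apply sqrt_mult; auto.
  + rewrite (sqrt_neg_0 q) by lra. rewrite Rmult_0_r. apply sqrt_neg_0. nra.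
- destruct (Rle_lt_dec 0 p) as [Hp|Hp].
  + apply sqrt_mult; auto.
  + rewrite (sqrt_neg_0 p) by lra. rewrite Rmult_0_l. apply sqrt_neg_0. nra.
Qed.

Lemma kf_rep a b x : a ^ 2 <= b ^ 2 ->
  kf a b x = sqrt (b ^ 2 - x ^ 2) * sqrt (x ^ 2 - a ^ 2) / (1 + x).
Proof.
intros Hab. unfold kf, Qf. rewrite sqrt_mult_gen. reflexivity.
destruct (Rle_lt_dec (x ^ 2) (a ^ 2)); [left|right]; lra.
Qed.

Lemma RInt_zero p q : RInt (fun _ => 0) p q = 0.
Proof. rewrite RInt_const. toR. unfold scal; simpl; unfold mult; simpl. ring. Qed.

Lemma kf_zero_left a b p : 0 <= p -> p <= a -> a < b -> RInt (kf a b) p a = 0.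
Proof.
intros Hp Hpa Hab. rewrite (RInt_ext_R _ (fun _ => 0)). apply RInt_zero.
intros x Hx. rewrite Rmin_left in Hx by lra. rewrite Rmax_right in Hx by lra.
unfold kf, Qf. rewrite sqrt_neg_0. unfold Rdiv; ring. assert (0 <= b ^ 2 - x ^ 2) by nra. assert (x ^ 2 - a ^ 2 <= 0) by nra. nra.
Qed.

Lemma kf_zero_right a b q : 0 <= a -> a < b -> b <= q -> RInt (kf a b) b q = 0.
Proof.
intros Ha Hab Hq. rewrite (RInt_ext_R _ (fun _ => 0)). apply RInt_zero.
intros x Hx. rewrite Rmin_left in Hx by lra. rewrite Rmax_right in Hx by lra.
unfold kf, Qf. rewrite sqrt_neg_0. unfold Rdiv; ring. assert (b ^ 2 - x ^ 2 <= 0) by nra. assert (0 <= x ^ 2 - a ^ 2) by nra. nra.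
Qed.

Lemma Jf_ext a b q : 0 <= a -> a < b -> b <= q -> Jf a b = RInt (kf a b) 0 q.
Proof.
intros Ha Hab Hq. unfold Jf.
rewrite (Chasles_R (kf a b) 0 a q) by (apply ex_RInt_kf; lra).
rewrite (Chasles_R (kf a b) a b q) by (apply ex_RInt_kf; lra).
rewrite kf_zero_left, kf_zero_right by lra. rewrite Rplus_0_l, Rplus_0_r. reflexivity.
Qed.

Lemma Jf_pos a b : 0 <= a < 1 -> 1 < b -> 0 < Jf a b.
Proof.
intros Ha Hb. unfold Jf. apply RInt_gt_0. lra.
- intros x Hx. unfold kf, Qf. apply Rdiv_lt_0_compat; [|lra]. apply sqrt_lt_R0.
  apply Rmult_lt_0_compat; nra.
- intros x Hx. apply kf_cont. lra.
Qed.

Lemma Jf_L a1 a2 b : 0 <= a1 -> a1 <= a2 -> a2 < 1 -> 1 < b -> Jf a2 b <= Jf a1 b.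
Proof.
intros H1 H2 H3 Hb.
rewrite (Jf_ext a1 b b), (Jf_ext a2 b b) by lra.
apply RInt_le. lra. apply ex_RInt_kf; lra. apply ex_RInt_kf; lra.
intros x Hx. rewrite !kf_rep by nra.
unfold Rdiv. apply Rmult_le_compat_r. apply Rlt_le, Rinv_0_lt_compat; lra.
apply Rmult_le_compat_l. apply sqrt_pos. apply sqrt_le_1_alt. nra.
Qed.

Lemma Jf_R a b1 b2 : 0 <= a < 1 -> 1 < b1 -> b1 <= b2 ->
  0 <= Jf a b2 - Jf a b1 <= b2 / (1 + b2) * (PI / 4 * (b2 ^ 2 - b1 ^ 2)).
Proof.
intros Ha Hb1 Hb12.
rewrite (Jf_ext a b1 b2), (Jf_ext a b2 b2) by lra.
assert (Hex1 := ex_RInt_kf a b1 0 b2 ltac:(lra) ltac:(lra)).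
assert (Hex2 := ex_RInt_kf a b2 0 b2 ltac:(lra) ltac:(lra)).
assert (E : RInt (kf a b2) 0 b2 - RInt (kf a b1) 0 b2 =
            RInt (fun x => kf a b2 x - kf a b1 x) 0 b2).
{ symmetry. apply (@is_RInt_unique R_CompleteNormedModule).
  apply (is_RInt_minus (kf a b2) (kf a b1) 0 b2);
  apply (@RInt_correct R_CompleteNormedModule); auto. }
rewrite E.
set (C1f := fun x => sqrt (b1 ^ 2 - x ^ 2)).
set (C2f := fun x => sqrt (b2 ^ 2 - x ^ 2)).
set (k := b2 / (1 + b2)).
assert (Hk : 0 < k < 1) by (unfold k; split; [apply Rdiv_lt_0_compat|apply Rmult_lt_reg_r with (1 + b2); [|unfold Rdiv; rewrite Rmult_assoc, Rinv_l]]; lra).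
assert (Hexd : ex_RInt (fun x => kf a b2 x - kf a b1 x) 0 b2).
{ apply (ex_RInt_minus (kf a b2) (kf a b1) 0 b2 Hex2 Hex1). }
assert (HC1 : forall q, ex_RInt C1f 0 q).
{ intros q. apply ex_RInt_cont. intros. unfold C1f. apply continuous_sqrt_comp. apply cont_of_der. auto_derive. auto. }
assert (HC2 : forall q, ex_RInt C2f 0 q).
{ intros q. apply ex_RInt_cont. intros. unfold C2f. apply continuous_sqrt_comp. apply cont_of_der. auto_derive. auto. }
assert (HC1' : ex_RInt C1f b1 b2).
{ apply ex_RInt_cont. intros. unfold C1f. apply continuous_sqrt_comp. apply cont_of_der. auto_derive. auto. }
assert (Hpt : forall x, 0 < x < b2 -> 0 <= kf a b2 x - kf a b1 x <= k * (C2f x - C1f x)).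
{ intros x Hx. rewrite !kf_rep by nra. fold (C1f x) (C2f x).
  set (s := sqrt (x ^ 2 - a ^ 2)).
  assert (Hs0 : 0 <= s) by apply sqrt_pos.
  assert (Hsx : s <= x).
  { unfold s. apply Rle_trans with (sqrt (x ^ 2)). apply sqrt_le_1_alt. nra. rewrite sqrt_pow2; lra. }
  assert (HC : C1f x <= C2f x) by (unfold C1f, C2f; apply sqrt_le_1_alt; nra).
  assert (Hxk : x / (1 + x) <= k).
  { unfold k. apply Rmult_le_reg_r with ((1 + x) * (1 + b2)). nra.
    field_simplify; nra. }
  replace (C2f x * s / (1 + x) - C1f x * s / (1 + x)) with ((C2f x - C1f x) * (s / (1 + x))) by (field; lra).
  split. apply Rmult_le_pos. lra. apply Rdiv_le_0_compat; lra.
  rewrite (Rmult_comm k). apply Rmult_le_compat_l. lra.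
  apply Rle_trans with (x / (1 + x)); auto.
  unfold Rdiv. apply Rmult_le_compat_r. apply Rlt_le, Rinv_0_lt_compat; lra. auto. }
split.
- apply Rle_trans with (RInt (fun _ => 0) 0 b2). rewrite RInt_zero; lra.
  apply RInt_le. lra. apply ex_RInt_cont; intros; apply continuous_const. auto.
  intros x Hx. apply Hpt; auto.
- apply Rle_trans with (RInt (fun x => k * C2f x - k * C1f x) 0 b2).
  apply RInt_le. lra. auto.
  apply ex_RInt_cont. intros. apply cont_minus; apply cont_mult; try apply continuous_const;
   apply continuous_sqrt_comp; apply cont_of_der; auto_derive; auto.
  intros x Hx. specialize (Hpt x Hx). lra.
  rewrite RInt_lin by auto.
  rewrite (Chasles_R C1f 0 b1 b2) by auto.
  unfold C1f, C2f. rewrite !quarter_circle by lra.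
  rewrite (RInt_ext_R _ (fun _ => 0) b1 b2). rewrite RInt_zero.
  right. field.
  intros x Hx. rewrite Rmin_left in Hx by lra. rewrite Rmax_right in Hx by lra.
  apply sqrt_neg_0. nra.
Qed.

Lemma Jf_diag b : 1 < b <= 2 -> Jf (2 - b) b < PI / 2 * (b - 1) ^ 2.
Proof.
intros Hb. set (d := b - 1).
assert (Hd : 0 < d) by (unfold d; lra).
replace (PI / 2 * d ^ 2) with (PI * d ^ 2 / 2) by field.
rewrite <- (semi_circle d 1 Hd).
replace (1 - d) with (2 - b) by (unfold d; ring).
replace (1 + d) with b by (unfold d; ring).
unfold Jf. apply RInt_lt. lra.
- intros; apply Sc_cont.
- intros x Hx. apply kf_cont. lra.
- intros x Hx. unfold kf, Sc.
  set (D0 := d ^ 2 - (x - 1) ^ 2).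
  assert (HD0 : 0 < D0) by (unfold D0, d; nra).
  assert (EQ : Qf (2 - b) b x = D0 * ((1 + x) ^ 2 - d ^ 2)) by (unfold Qf, D0, d; ring).
  rewrite EQ.
  apply Rmult_lt_reg_r with (1 + x). lra.
  unfold Rdiv. rewrite Rmult_assoc, Rinv_l, Rmult_1_r by lra.
  replace (sqrt D0 * (1 + x)) with (sqrt (D0 * (1 + x) ^ 2)).
  apply sqrt_lt_1_alt. split.
  + apply Rmult_le_pos. lra. unfold d in *. nra.
  + assert (0 < d ^ 2) by nra. nra.
  + rewrite sqrt_mult by nra. rewrite sqrt_pow2 by lra. reflexivity.
Qed.

Lemma PhiF_diag b : 1 < b <= 2 -> 0 < PhiF (2 - b) b.
Proof.
intros Hb. unfold PhiF. pose proof (Jf_diag b Hb). pose proof PI_RGT_0.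
assert (PI * Jf (2 - b) b < PI * (PI / 2 * (b - 1) ^ 2)) by (apply Rmult_lt_compat_l; lra).
assert (E : PI ^ 2 / 4 * ((2 - b) ^ 2 + b ^ 2 - 2) = PI * (PI / 2 * (b - 1) ^ 2)) by field.
lra.
Qed.

Lemma PhiF_L a1 a2 b : 0 <= a1 -> a1 < a2 -> a2 < 1 -> 1 < b -> PhiF a1 b < PhiF a2 b.
Proof.
intros. unfold PhiF. pose proof (Jf_L a1 a2 b ltac:(lra) ltac:(lra) ltac:(lra) ltac:(lra)).
pose proof PI_RGT_0.
assert (PI * Jf a2 b <= PI * Jf a1 b) by (apply Rmult_le_compat_l; lra).
assert (0 < PI ^ 2 / 4 * (a2 ^ 2 - a1 ^ 2)).
{ apply Rmult_lt_0_compat. apply Rdiv_lt_0_compat. nra. lra. nra. }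
nra.
Qed.

Lemma PhiF_L' a1 a2 b : 0 <= a1 -> a1 <= a2 -> a2 < 1 -> 1 < b -> PhiF a1 b <= PhiF a2 b.
Proof. intros. destruct (Req_dec a1 a2) as [->|]. lra. left. apply PhiF_L; lra. Qed.

Lemma PhiF_R a b1 b2 : 0 <= a < 1 -> 1 < b1 -> b1 < b2 ->
  0 < PhiF a b2 - PhiF a b1 <= PI ^ 2 / 4 * (b2 ^ 2 - b1 ^ 2).
Proof.
intros Ha Hb1 Hb12. unfold PhiF.
destruct (Jf_R a b1 b2 Ha Hb1 ltac:(lra)) as [H1 H2].
pose proof PI_RGT_0.
set (k := b2 / (1 + b2)) in *.
assert (Hk : k < 1).
{ unfold k. apply Rmult_lt_reg_r with (1 + b2). lra. unfold Rdiv. rewrite Rmult_assoc, Rinv_l; lra. }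
assert (Hb : 0 < b2 ^ 2 - b1 ^ 2) by nra.
assert (PI * (Jf a b2 - Jf a b1) <= PI * (k * (PI / 4 * (b2 ^ 2 - b1 ^ 2)))) by (apply Rmult_le_compat_l; lra).
assert (0 <= PI * (Jf a b2 - Jf a b1)) by (apply Rmult_le_pos; lra).
assert (0 < PI * PI / 4 * (b2 ^ 2 - b1 ^ 2) * (1 - k)).
{ apply Rmult_lt_0_compat; [|lra]. apply Rmult_lt_0_compat; [|lra]. nra. }
split; nra.
Qed.

Lemma sqrt2_bounds : 1 < sqrt 2 < 2.
Proof.
split.
- rewrite <- sqrt_1. apply sqrt_lt_1_alt. lra.
- replace 2 with (sqrt (2 ^ 2)) at 2 by (rewrite sqrt_pow2; lra).
  apply sqrt_lt_1_alt. lra.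
Qed.

Definition clamp (x : R) := Rmax (sqrt 2) (Rmin 2 x).

Lemma clamp_range x : sqrt 2 <= clamp x <= 2.
Proof.
pose proof sqrt2_bounds. unfold clamp. split. apply Rmax_l.
apply Rmax_lub. lra. apply Rmin_l.
Qed.

Lemma clamp_id x : sqrt 2 <= x <= 2 -> clamp x = x.
Proof. intros H. unfold clamp. rewrite Rmin_right by lra. rewrite Rmax_right; lra. Qed.

Lemma clamp_lip x y : Rabs (clamp x - clamp y) <= Rabs (x - y).
Proof.
pose proof sqrt2_bounds. unfold clamp, Rmax, Rmin.
repeat destruct Rle_dec; split_Rabs; lra.
Qed.

Lemma PhiF_lip u v : sqrt 2 <= u <= 2 -> sqrt 2 <= v <= 2 ->
  Rabs (PhiF 0 u - PhiF 0 v) <= PI ^ 2 * Rabs (u - v).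
Proof.
intros Hu Hv. pose proof sqrt2_bounds. pose proof PI_RGT_0.
assert (HP : 0 < PI ^ 2) by nra.
destruct (Rtotal_order u v) as [Huv|[Huv|Huv]].
- destruct (PhiF_R 0 u v ltac:(lra) ltac:(lra) Huv) as [H1 H2].
  rewrite Rabs_left by lra. rewrite Rabs_left by lra.
  assert (v ^ 2 - u ^ 2 <= 4 * (v - u)) by nra.
  nra.
- subst. rewrite !Rminus_eq_0, Rabs_R0. lra.
- destruct (PhiF_R 0 v u ltac:(lra) ltac:(lra) Huv) as [H1 H2].
  rewrite Rabs_right by lra. rewrite Rabs_right by lra.
  assert (u ^ 2 - v ^ 2 <= 4 * (u - v)) by nra.
  nra.
Qed.

Lemma h_cont : continuity (fun x => PhiF 0 (clamp x)).
Proof.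
intros x. pose proof PI_RGT_0.
assert (HP : 0 < PI ^ 2) by nra.
unfold continuity_pt, continue_in, limit1_in, limit_in. intros e He.
exists (e / (PI ^ 2)). split. apply Rdiv_lt_0_compat; lra.
intros y [_ Hy]. simpl in *. unfold R_dist in *.
eapply Rle_lt_trans. apply PhiF_lip; apply clamp_range.
eapply Rle_lt_trans. apply Rmult_le_compat_l. lra. apply clamp_lip.
apply Rmult_lt_reg_l with (/ PI ^ 2). apply Rinv_0_lt_compat; lra.
rewrite <- Rmult_assoc, Rinv_l by lra. rewrite Rmult_1_l.
unfold Rdiv in Hy. rewrite Rmult_comm. exact Hy.
Qed.

Theorem lemma4p10 :
  (forall a b : R, 0 <= a < 1 -> 1 < b -> pv_converges a b (Phi a b)) /\
  (forall R0 L1 L2 : R, 1 < R0 -> 0 <= L1 -> L1 < L2 -> L2 < 1 ->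
      Phi L1 R0 < Phi L2 R0) /\
  (forall L0 R1 R2 : R, 0 <= L0 < 1 -> 1 < R1 -> R1 < R2 ->
      Phi L0 R1 < Phi L0 R2) /\
  (exists Rc : R, (1 < Rc /\ Phi 0 Rc = 0) /\
      forall R' : R, 1 < R' -> Phi 0 R' = 0 -> R' = Rc) /\
  (forall a b : R, 0 <= a < 1 -> 1 < b -> Phi a b = 0 ->
      a + b < 2 /\ a ^ 2 + b ^ 2 > 2).
Proof.
pose proof PI_RGT_0 as HPI.
split; [|split; [|split; [|split]]].
- intros a b Ha Hb. rewrite Phi_eq by auto. apply pv_conv; auto.
- intros R0 L1 L2 H1 H2 H3 H4. rewrite !Phi_eq by lra. apply PhiF_L; lra.
- intros L0 R1 R2 H1 H2 H3. rewrite !Phi_eq by lra.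
  destruct (PhiF_R L0 R1 R2 H1 H2 H3). lra.
- pose proof sqrt2_bounds as Hs.
  assert (Hneg : PhiF 0 (clamp (sqrt 2)) < 0).
  { rewrite clamp_id by lra. unfold PhiF.
    pose proof (Jf_pos 0 (sqrt 2) ltac:(lra) ltac:(lra)).
    rewrite pow2_sqrt by lra.
    assert (0 < PI * Jf 0 (sqrt 2)) by (apply Rmult_lt_0_compat; lra).
    replace (0 ^ 2 + 2 - 2) with 0 by ring. lra. }
  assert (Hpos : 0 < PhiF 0 (clamp 2)).
  { rewrite clamp_id by lra. replace 0 with (2 - 2) at 2 by ring. apply PhiF_diag. lra. }
  destruct (IVT (fun x => PhiF 0 (clamp x)) (sqrt 2) 2 h_cont ltac:(lra) Hneg Hpos) as [z [Hz Hz0]].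
  rewrite clamp_id in Hz0 by lra.
  exists z. split.
  + split. lra. rewrite Phi_eq by lra. exact Hz0.
  + intros R' HR' H0. rewrite Phi_eq in H0 by lra.
    destruct (Rtotal_order R' z) as [Hlt|[Heq|Hgt]]; auto.
    * destruct (PhiF_R 0 R' z ltac:(lra) HR' Hlt). lra.
    * destruct (PhiF_R 0 z R' ltac:(lra) ltac:(lra) Hgt). lra.
- intros a b Ha Hb H0. rewrite Phi_eq in H0 by auto. split.
  + destruct (Rlt_le_dec (a + b) 2) as [|Hab]; auto. exfalso.
    destruct (Rle_lt_dec b 2).
    * pose proof (PhiF_L' (2 - b) a b ltac:(lra) ltac:(lra) ltac:(lra) Hb).
      pose proof (PhiF_diag b ltac:(lra)). lra.
    * pose proof (PhiF_L' 0 a b ltac:(lra) ltac:(lra) ltac:(lra) Hb).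
      destruct (PhiF_R 0 2 b ltac:(lra) ltac:(lra) ltac:(lra)).
      pose proof (PhiF_diag 2 ltac:(lra)). replace (2 - 2) with 0 in * by ring. lra.
  + unfold PhiF in H0. pose proof (Jf_pos a b Ha Hb).
    assert (0 < PI * Jf a b) by (apply Rmult_lt_0_compat; lra).
    assert (0 < PI ^ 2 / 4) by (apply Rdiv_lt_0_compat; nra).
    nra.
Qed.
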